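(* Let $G=(g_1,\dots,g_k)\in\mathbb{N}_0^k$ be telescopic with $g_1>0$, $c(G)=(c_2,\dots,c_k)$ and $\gcd(G)=d$, and suppose $g_n=c_mg_m$ for some $1<n<m\le k$. Then $g_n=z_nC_{n,k}$ where $z_n$ is a non-negative multiple of $d$ with $\gcd(z_n/d,c_n)=1$; moreover $\gcd(z_n/d,c_m)=1$, and $\gcd(c_j,c_m)=1$ for all $j$ with $n<j<m$.
   Context: $\langle\cdot\rangle$ denotes the set of $\mathbb{N}_0$-linear combinations. $G_i=(g_1,\dots,g_i)$, $d_i=\gcd(G_i)$, $c_j=d_{j-1}/d_j$; $G$ is telescopic if $c_jg_j\in\langle G_{j-1}\rangle$ for all $2\le j\le k$. $C_{a,b}=\prod_{j=a+1}^b c_j$, with the empty product equal to $1$. *)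

(* Defs.v *)
(* A sequence G = (g_1,...,g_k) is represented by
   g : nat -> nat together with its length k; only g 1, ..., g k matter. *)
From mathcomp Require Import all_boot.
Set Implicit Arguments. Unset Strict Implicit. Unset Printing Implicit Defensive.

Definition dd (g : nat -> nat) (i : nat) : nat :=
  \big[gcdn/0]_(1 <= j < i.+1) g j.

Definition cc (g : nat -> nat) (j : nat) : nat := dd g j.-1 %/ dd g j.

Definition CC (g : nat -> nat) (a b : nat) : nat :=
  \prod_(a.+1 <= j < b.+1) cc g j.

Definition in_semigroup (g : nat -> nat) (i x : nat) : Prop :=
  exists a : nat -> nat, x = \sum_(1 <= j < i.+1) a j * g j.

Definition telescopic (g : nat -> nat) (k : nat) : Prop :=
  forall j, 2 <= j <= k -> in_semigroup g j.-1 (cc g j * g j).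

(* Main.v *)
Require Import Defs.
From mathcomp Require Import all_boot.
From mathcomp Require Import zify.

Lemma ddS g i : dd g i.+1 = gcdn (dd g i) (g i.+1).
Proof. by rewrite /dd big_nat_recr. Qed.

Lemma ddstep g b : dd g b = cc g b.+1 * dd g b.+1.
Proof. by rewrite /cc /= divnK // ddS dvdn_gcdl. Qed.

Lemma ddCC g a b : a <= b -> dd g a = CC g a b * dd g b.
Proof.
elim: b => [|b IH]; first by rewrite leqn0 => /eqP ->; rewrite /CC big_geq // mul1n.
rewrite leq_eqVlt => /orP [/eqP ->|Hab]; first by rewrite /CC big_geq // mul1n.
rewrite IH // /CC (big_nat_recr b.+1) //= -mulnA -ddstep; done.
Qed.

Lemma cdg m n : 0 < gcdn m n -> coprime (m %/ gcdn m n) (n %/ gcdn m n).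
Proof.
move=> g0; rewrite /coprime -(eqn_pmul2r g0) mul1n muln_gcdl !divnK ?dvdn_gcdl ?dvdn_gcdr //.
Qed.

Theorem mainTheorem20 (g : nat -> nat) (k n m : nat) :
  telescopic g k -> 0 < g 1 ->
  1 < n -> n < m -> m <= k ->
  g n = cc g m * g m ->
  exists z : nat,
    [/\ g n = z * CC g n k,
        dd g k %| z,
        coprime (z %/ dd g k) (cc g n),
        coprime (z %/ dd g k) (cc g m)
      & forall j, n < j < m -> coprime (cc g j) (cc g m)].
Proof.
move=> _ g1 n1 nm mk Hn.
have dd1 : dd g 1 = g 1 by rewrite ddS /dd big_geq // gcd0n.
have ddpos : forall b, 0 < b -> 0 < dd g b.
  move=> b b0; apply: (@dvdn_gt0 _ (g 1) g1); rewrite -dd1 (@ddCC g 1 b b0) dvdn_mull //.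
have Dpos : 0 < dd g k by apply: ddpos; lia.
have npos : 0 < n by lia.
have mpos : 0 < m by lia.
have dvn : dd g n %| g n.
  by case: n n1 {Hn nm npos} => [|n'] // _; rewrite ddS dvdn_gcdr.
set x := g n %/ dd g n.
have Hx : g n = x * dd g n by rewrite divnK.
case: m nm mk Hn mpos => [|m'] // nm mk Hn _.
set e := dd g m'.+1.
have epos : 0 < e by apply: ddpos.
have cop : coprime (cc g m'.+1) (g m'.+1 %/ e).
  rewrite /cc /= /e ddS; apply: cdg.
  by rewrite -ddS.
set h := g m'.+1 %/ e in cop *.
have He : g m'.+1 = h * e by rewrite divnK // /e ddS dvdn_gcdr.
have Hdn : dd g n = CC g n m' * (cc g m'.+1 * e) by rewrite -ddstep (@ddCC g n m') //; lia.
have cpos : 0 < cc g m'.+1 * e by rewrite /e -ddstep; apply: ddpos; lia.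
have xP : x * CC g n m' = h.
  apply/eqP; rewrite -(eqn_pmul2r cpos) -mulnA -Hdn -Hx Hn He.
  by apply/eqP; lia.
have cop2 : coprime x (cc g m'.+1).
  by rewrite coprime_sym (coprime_dvdr _ cop) // -xP dvdn_mulr.
exists (x * dd g k); split.
- rewrite -mulnA (mulnC (dd g k)) -(@ddCC g n k); [exact: Hx| lia].
- by apply: dvdn_mull.
- rewrite mulnK //.
  have ddn : dd g n = gcdn (dd g n.-1) (g n) by have := ddS g n.-1; rewrite prednK.
  rewrite /x /cc ddn coprime_sym; apply: cdg; by rewrite -ddn ddpos.
- by rewrite mulnK.
- move=> j /andP [nj jm].
  rewrite coprime_sym (coprime_dvdr _ cop) // -xP dvdn_mull //.
  rewrite /CC (bigD1_seq j) /= ?dvdn_mulr // ?mem_index_iota ?nj // ?iota_uniq //.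
Qed.
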